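(* Let $\mathfrak{n}$ be a real nilpotent Lie algebra and $J$ a $3$-step complex structure on $\mathfrak{n}$. Then no inner product on $\mathfrak{n}$ that is Hermitian with respect to $J$ is pluriclosed.
   Context: A complex structure on a real Lie algebra $\mathfrak{g}$ is a linear map $J:\mathfrak{g}\to\mathfrak{g}$ with $J^2=-I$ and $N_J(x,y):=[x,y]+J([Jx,y]+[x,Jy])-[Jx,Jy]=0$ for all $x,y\in\mathfrak{g}$. Given such $J$, define inductively $\mathfrak{a}_0(J)=0$ and $\mathfrak{a}_\ell(J)=\{x\in\mathfrak{g}: [x,\mathfrak{g}]\subset\mathfrak{a}_{\ell-1}(J)\text{ and }[Jx,\mathfrak{g}]\subset\mathfrak{a}_{\ell-1}(J)\}$ for $\ell\ge1$; $J$ is $t$-step if $t$ is the smallest integer with $\mathfrak{a}_t(J)=\mathfrak{g}$. An inner product $\langle\cdot,\cdot\rangle$ is Hermitian if $\langle Jx,Jy\rangle=\langle x,y\rangle$. Its torsion 3-form is $c(x,y,z)=-\langle[Jx,Jy],z\rangle-\langle[Jy,Jz],x\rangle-\langle[Jz,Jx],y\rangle$, and $\langle\cdot,\cdot\rangle$ is pluriclosed if $dc=0$, where $d$ is the Chevalley–Eilenberg differential on $\Lambda^*\mathfrak{g}^*$ (equivalently the corresponding left-invariant 3-form on the Lie group is closed). *)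

(* Defs.v *)
From HB Require Import structures.
From mathcomp Require Import all_boot all_order all_algebra.
From mathcomp Require Import reals.
Set Implicit Arguments. Unset Strict Implicit. Unset Printing Implicit Defensive.
Import Order.TTheory GRing.Theory Num.Theory.
Local Open Scope ring_scope.

Section LieDefs.
Variables (R : realType) (n : nat).
Notation V := 'rV[R]_n.

Definition is_lie_bracket (br : V -> V -> V) : Prop :=
  [/\ (forall (a : R) (x y z : V), br (a *: x + y) z = a *: br x z + br y z),
      (forall (a : R) (x y z : V), br z (a *: x + y) = a *: br z x + br z y),
      (forall x : V, br x x = 0) &
      (forall x y z : V, br x (br y z) + br y (br z x) + br z (br x y) = 0)].

Fixpoint iter_br (br : V -> V -> V) (xs : seq V) (x : V) : V :=
  match xs with
  | [::] => x
  | y :: ys => br y (iter_br br ys x)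
  end.

(* Nilpotent: some term of the lower central series vanishes, i.e. all
   brackets of length k+1 vanish for some k (they span g^{k+1}). *)
Definition lie_nilpotent (br : V -> V -> V) : Prop :=
  exists k : nat, forall (xs : seq V) (x : V), size xs = k -> iter_br br xs x = 0.

Definition appJ (J : 'M[R]_n) (x : V) : V := x *m J.

(* Complex structure: J^2 = -I and vanishing Nijenhuis tensor. *)
Definition is_complex_structure (br : V -> V -> V) (J : 'M[R]_n) : Prop :=
  J *m J = - 1%:M /\
  forall x y : V,
    br x y + appJ J (br (appJ J x) y + br x (appJ J y))
      - br (appJ J x) (appJ J y) = 0.

Fixpoint aJ (br : V -> V -> V) (J : 'M[R]_n) (l : nat) : V -> Prop :=
  match l with
  | 0 => fun x => x = 0
  | l'.+1 => fun x => forall y : V,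
      aJ br J l' (br x y) /\ aJ br J l' (br (appJ J x) y)
  end.

Definition is_t_step (br : V -> V -> V) (J : 'M[R]_n) (t : nat) : Prop :=
  (forall x : V, aJ br J t x) /\
  (forall s : nat, (s < t)%N -> ~ (forall x : V, aJ br J s x)).

Definition is_inner_product (ip : V -> V -> R) : Prop :=
  [/\ (forall (a : R) (x y z : V), ip (a *: x + y) z = a * ip x z + ip y z),
      (forall x y : V, ip x y = ip y x) &
      (forall x : V, x != 0 -> 0 < ip x x)].

Definition is_hermitian (J : 'M[R]_n) (ip : V -> V -> R) : Prop :=
  forall x y : V, ip (appJ J x) (appJ J y) = ip x y.

Definition torsion (br : V -> V -> V) (J : 'M[R]_n) (ip : V -> V -> R)
  (x y z : V) : R :=
  - ip (br (appJ J x) (appJ J y)) z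
  - ip (br (appJ J y) (appJ J z)) x
  - ip (br (appJ J z) (appJ J x)) y.

(* Chevalley-Eilenberg differential of a 3-form on V:
   dc(x0,x1,x2,x3) = sum_{i<j} (-1)^(i+j) c([xi,xj], ..., ^xi, ..., ^xj, ...) *)
Definition CE_d3 (br : V -> V -> V) (c : V -> V -> V -> R)
  (x0 x1 x2 x3 : V) : R :=
  - c (br x0 x1) x2 x3 + c (br x0 x2) x1 x3 - c (br x0 x3) x1 x2
  - c (br x1 x2) x0 x3 + c (br x1 x3) x0 x2 - c (br x2 x3) x0 x1.

Definition is_pluriclosed (br : V -> V -> V) (J : 'M[R]_n) (ip : V -> V -> R)
  : Prop :=
  forall x0 x1 x2 x3 : V, CE_d3 br (torsion br J ip) x0 x1 x2 x3 = 0.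

End LieDefs.

(* Main.v *)
Require Import Defs.
From HB Require Import structures.
From mathcomp Require Import all_boot all_order all_algebra.
From mathcomp Require Import reals.
From mathcomp Require Import ring lra.
Set Implicit Arguments. Unset Strict Implicit. Unset Printing Implicit Defensive.
Import Order.TTheory GRing.Theory Num.Theory.
Local Open Scope ring_scope.

Section Proof.
Variables (R : realType) (n : nat).
Variables (br : 'rV[R]_n -> 'rV[R]_n -> 'rV[R]_n) (J : 'M[R]_n)
  (ip : 'rV[R]_n -> 'rV[R]_n -> R).
Hypothesis Hbr : is_lie_bracket br.
Hypothesis HJ2 : J *m J = - 1%:M.
Hypothesis Hip : is_inner_product ip.

Local Notation Jf := (appJ J).

Lemma brDl x y z : br (x + y) z = br x z + br y z.
Proof. by case: Hbr => Hl _ _ _; have := Hl 1 x y z; rewrite !scale1r. Qed.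
Lemma brDr x y z : br z (x + y) = br z x + br z y.
Proof. by case: Hbr => _ Hr _ _; have := Hr 1 x y z; rewrite !scale1r. Qed.
Lemma brl0 z : br 0 z = 0.
Proof.
have h := brDl 0 0 z; rewrite addr0 in h.
have : br 0 z + br 0 z - br 0 z = br 0 z - br 0 z by rewrite -h.
by rewrite addrK subrr.
Qed.
Lemma brr0 z : br z 0 = 0.
Proof.
have h := brDr 0 0 z; rewrite addr0 in h.
have : br z 0 + br z 0 - br z 0 = br z 0 - br z 0 by rewrite -h.
by rewrite addrK subrr.
Qed.
Lemma brNl x z : br (- x) z = - br x z.
Proof.
case: Hbr => Hl _ _ _; have h := Hl (-1) x 0 z.
by rewrite addr0 brl0 addr0 !scaleN1r in h.
Qed.
Lemma brNr x z : br z (- x) = - br z x.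
Proof.
case: Hbr => _ Hr _ _; have h := Hr (-1) x 0 z.
by rewrite addr0 brr0 addr0 !scaleN1r in h.
Qed.
Lemma br_anti x y : br x y = - br y x.
Proof.
case: Hbr => _ _ Ha _; have := Ha (x + y).
rewrite brDl !brDr !Ha add0r addr0 => /eqP.
by rewrite addr_eq0 => /eqP.
Qed.

Lemma ip0l z : ip 0 z = 0.
Proof.
case: Hip => Hl _ _; have h := Hl 1 0 0 z; rewrite scale1r addr0 mul1r in h.
have : ip 0 z + ip 0 z - ip 0 z = ip 0 z - ip 0 z by rewrite -h.
by rewrite addrK subrr.
Qed.
Lemma ip0r z : ip z 0 = 0.
Proof. by case: Hip => _ Hs _; rewrite Hs ip0l. Qed.
Lemma ipNl x z : ip (- x) z = - ip x z.
Proof.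
case: Hip => Hl _ _; have h := Hl (-1) x 0 z.
by rewrite addr0 ip0l addr0 mulN1r scaleN1r in h.
Qed.
Lemma ipNr x z : ip z (- x) = - ip z x.
Proof. by case: Hip => _ Hs _; rewrite Hs ipNl Hs. Qed.
Lemma ip_ge0 u : 0 <= ip u u.
Proof.
case: Hip => _ _ Hp; have [->|nz] := eqVneq u 0; first by rewrite ip0l.
exact: ltW (Hp _ nz).
Qed.
Lemma ip_eq0 u : ip u u = 0 -> u = 0.
Proof.
case: Hip => _ _ Hp => h; apply/eqP; apply/negPn/negP => nz.
by have := Hp _ nz; rewrite h ltxx.
Qed.

Lemma JJ x : Jf (Jf x) = - x.
Proof. by rewrite /appJ -mulmxA HJ2 mulmxN mulmx1. Qed.
Lemma J0 : Jf 0 = 0.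
Proof. by rewrite /appJ mul0mx. Qed.
Lemma JN x : Jf (- x) = - Jf x.
Proof. by rewrite /appJ mulNmx. Qed.

Lemma a1N w : aJ br J 1 w -> aJ br J 1 (- w).
Proof.
move=> /= h y; case: (h y) => h1 h2.
by rewrite JN !brNl h1 h2 oppr0.
Qed.

Lemma a2J z : aJ br J 2 z -> aJ br J 2 (Jf z).
Proof.
move=> h y; case: (h y) => h1 h2; split => //.
by rewrite JJ brNl; apply: a1N.
Qed.

Hypothesis H3 : forall x : 'rV[R]_n, aJ br J 3 x.
Hypothesis Hpc : is_pluriclosed br J ip.

Lemma a1_facts w : aJ br J 1 w ->
  [/\ forall t, br w t = 0, forall t, br t w = 0,
      forall t, br (Jf w) t = 0 & forall t, br t (Jf w) = 0].
Proof.
move=> /= h; split => t; try by case: (h t).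
- by rewrite br_anti; case: (h t) => -> _; rewrite oppr0.
- by rewrite br_anti; case: (h t) => _ ->; rewrite oppr0.
Qed.

Lemma a2_br z x : aJ br J 2 z -> aJ br J 1 (br x z).
Proof. by move=> h; rewrite br_anti; apply: a1N; case: (h x). Qed.

Lemma L1 x y z : aJ br J 2 z -> br (Jf (br x y)) z = 0.
Proof.
move=> Hz.
suff L0 : forall z', aJ br J 2 z' -> br (Jf (br x y)) (Jf z') = 0.
  have := L0 _ (a2J Hz); rewrite JJ brNr => /eqP; rewrite oppr_eq0 => /eqP //.
move=> {Hz} z Hz.
have HB : aJ br J 2 (br x y) by case: (H3 x y).
have HJB := a2J HB.
set w := br (Jf (br x y)) (Jf z).
have Hw : aJ br J 1 w by rewrite /w; case: (HJB (Jf z)).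
have [w1 w2 w3 w4] := a1_facts Hw.
have [u1 _ u3 u4] := a1_facts (a2_br x Hz).
have [v1 _ v3 v4] := a1_facts (a2_br y Hz).
have H := Hpc x y z w.
rewrite /CE_d3 /torsion in H.
rewrite -/w !w2 !w3 !w4 !u3 !v3 !J0 !brl0 !brr0 !ip0l !ip0r in H.
apply: ip_eq0; lra.
Qed.

Lemma main x y X : br X (br x y) = 0 /\ br X (Jf (br x y)) = 0.
Proof.
set B := br x y.
have HB : aJ br J 2 B by case: (H3 x y).
have HJB := a2J HB.
set A := br X (Jf X).
have e1 : br (Jf A) B = 0 by apply: L1.
have e2 : br (Jf A) (Jf B) = 0 by apply: L1.
have e3 : br (Jf B) B = 0 by apply: L1.
have e1' : br B (Jf A) = 0 by rewrite br_anti e1 oppr0.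
have e3' : br B (Jf B) = 0 by rewrite br_anti e3 oppr0.
have [_ _ u2a u2b] := a1_facts (a2_br X HB).
have [_ _ u3a u3b] := a1_facts (a2_br X HJB).
have [_ _ u4a u4b] := a1_facts (a2_br (Jf X) HB).
have [_ _ u5a u5b] := a1_facts (a2_br (Jf X) HJB).
have H := Hpc X (Jf X) B (Jf B).
rewrite /CE_d3 /torsion in H.
rewrite -/A e3' !J0 !brl0 !brr0 !ip0l !ip0r !JJ in H.
rewrite ?u2a ?u2b ?u3a ?u3b ?u4a ?u4b ?u5a ?u5b ?brNl ?brNr ?opprK in H.
rewrite ?e1 ?e2 ?e3 ?e1' ?oppr0 ?brl0 ?brr0 ?ip0l ?ip0r ?ipNl ?ipNr in H.
have g2 := ip_ge0 (br X B).
have g3 := ip_ge0 (br X (Jf B)).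
have g4 := ip_ge0 (br (Jf X) B).
have g5 := ip_ge0 (br (Jf X) (Jf B)).
split; apply: ip_eq0; lra.
Qed.

End Proof.

Theorem mainTheorem14 (R : realType) (n : nat)
  (br : 'rV[R]_n -> 'rV[R]_n -> 'rV[R]_n) (J : 'M[R]_n) :
  is_lie_bracket br -> lie_nilpotent br ->
  is_complex_structure br J -> is_t_step br J 3 ->
  forall ip : 'rV[R]_n -> 'rV[R]_n -> R,
    is_inner_product ip -> is_hermitian J ip -> ~ is_pluriclosed br J ip.
Proof.
move=> Hbr _ [HJ2 _] [H3 Hs] ip Hip _ Hpc.
apply: (Hs 2%N) => // z /= y.
have key : forall a b, aJ br J 1 (br a b).
  move=> a b /= t.
  have [m1 m2] := main Hbr HJ2 Hip H3 Hpc a b t.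
  by rewrite (br_anti Hbr) m1 (br_anti Hbr) m2 !oppr0.
by split; apply: key.
Qed.
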